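(* If $\pi\in\mathrm{SR}^2$, then $\mathrm{TD}(\pi,\mathrm{R}\Pi^2)\le3$.
   Context: Fix a countably infinite set $X$ of variables and an alphabet $\Sigma$ disjoint from $X$; here $|\Sigma|=2$. A pattern is a nonempty finite string over $X\cup\Sigma$; $\Pi^z$ is the class of all patterns over an alphabet of size $z$. A substitution is a morphism $h:(X\cup\Sigma)^*\to\Sigma^*$ fixing every letter; $L(\pi)$, the erasing pattern language, is the set of all $h(\pi)$. A pattern is regular if each variable occurs at most once; $\mathrm{R}\Pi^z$ is the class of regular patterns in $\Pi^z$. A pattern is simple block-regular if it has the shape $X_1a_1X_2\cdots a_{n-1}X_n$ with $X_i\in X^+$, $a_i\in\Sigma$, each $X_i$ containing a variable occurring in no other block; $\mathrm{SR}^z$ is the class of simple block-regular patterns in $\Pi^z$. A labelled example is $(w,\pm)$ with $w\in\Sigma^*$; a teaching set for $\pi$ w.r.t. a class $\Pi$ is a set $T$ of labelled examples consistent with $\pi$ ($w\in L(\pi)$ iff the label is $+$) such that every $\tau\in\Pi$ consistent with $T$ has $L(\tau)=L(\pi)$; $\mathrm{TD}(\pi,\Pi)$ is the minimum size of such a set. *)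

(* Defs.v *)
From HB Require Import structures.
From mathcomp Require Import all_boot.
Set Implicit Arguments. Unset Strict Implicit. Unset Printing Implicit Defensive.

(* Alphabet Sigma with |Sigma| = 2 is [bool]; variables X are indexed by [nat]. *)
Inductive sym : Type := Var of nat | Let of bool.

Definition sym_eqb (s t : sym) : bool :=
  match s, t with
  | Var x, Var y => x == y
  | Let a, Let b => a == b
  | _, _ => false
  end.

Lemma sym_eqP : Equality.axiom sym_eqb.
Proof.
case=> [x|a] [y|b] /=; try by constructor.
  by apply: (iffP eqP) => [->|[]].
by apply: (iffP eqP) => [->|[]].
Qed.

HB.instance Definition _ := hasDecEq.Build sym sym_eqP.

Definition word := seq bool.

Definition pattern := seq sym.
Definition is_pattern (p : pattern) : bool := p != [::].

Definition subst (h : nat -> word) (p : pattern) : word :=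
  flatten [seq (match s with Var x => h x | Let a => [:: a] end) | s <- p].

(* Erasing pattern language. *)
Definition inL (p : pattern) (w : word) : Prop := exists h, w = subst h p.

Definition regular (p : pattern) : Prop :=
  is_pattern p /\ forall x, count_mem (Var x) p <= 1.

(* Simple block-regular patterns X_1 a_1 X_2 ... a_{n-1} X_n, given by the
   first block and the list of pairs (a_i, X_{i+1}). *)
Definition build_blocks (b0 : seq nat) (rest : seq (bool * seq nat)) : pattern :=
  map Var b0 ++ flatten [seq Let r.1 :: map Var r.2 | r <- rest].

Definition simple_block_regular (p : pattern) : Prop :=
  exists (b0 : seq nat) (rest : seq (bool * seq nat)),
    let blocks := b0 :: map snd rest in
    [/\ p = build_blocks b0 rest,
        all (fun b => b != [::]) blocks &
        forall i, i < size blocks ->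
          exists x, x \in nth [::] blocks i /\
            forall j, j < size blocks -> j != i -> x \notin nth [::] blocks j].

(* Labelled examples (w, true) = (w,+), (w, false) = (w,-). *)
Definition consistent (p : pattern) (T : seq (word * bool)) : Prop :=
  forall e, e \in T -> (inL p e.1 <-> e.2 = true).

Definition teaching_set (C : pattern -> Prop) (p : pattern)
    (T : seq (word * bool)) : Prop :=
  consistent p T /\
  forall q, C q -> consistent q T -> forall w, inL q w <-> inL p w.

Definition TD_le (C : pattern -> Prop) (p : pattern) (k : nat) : Prop :=
  exists T, size T <= k /\ teaching_set C p T.

(* Main.v *)
Require Import Defs.
From HB Require Import structures.
From mathcomp Require Import all_boot zify.
From Stdlib Require Import Classical.
Set Implicit Arguments. Unset Strict Implicit. Unset Printing Implicit Defensive.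

Lemma subst_nil h : subst h [::] = [::]. Proof. by []. Qed.
Lemma subst_var h x q : subst h (Var x :: q) = h x ++ subst h q. Proof. by []. Qed.
Lemma subst_let h a q : subst h (Let a :: q) = a :: subst h q. Proof. by []. Qed.
Lemma subst_cat h q1 q2 : subst h (q1 ++ q2) = subst h q1 ++ subst h q2.
Proof. by rewrite /subst map_cat flatten_cat. Qed.
Lemma subst_rcons h q a : subst h (rcons q (Let a)) = rcons (subst h q) a.
Proof. by rewrite -cats1 subst_cat cats1. Qed.

Definition cst (q : pattern) : word := subst (fun _ => [::]) q.

Lemma erase_sub h q : subseq (cst q) (subst h q).
Proof.
elim: q => [|[x|a] q IH] //.
  have -> : cst (Var x :: q) = cst q by [].
  by rewrite subst_var; apply: subseq_trans IH (suffix_subseq _ _).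
have -> : cst (Let a :: q) = a :: cst q by [].
by rewrite subst_let /= eqxx.
Qed.

Lemma inL_sub q w : inL q w -> subseq (cst q) w.
Proof. by case=> h ->; apply: erase_sub. Qed.

Lemma cst_inL q : inL q (cst q). Proof. by exists (fun _ => [::]). Qed.

Definition lin (q : pattern) := forall x, count_mem (Var x) q <= 1.

Lemma regular_lin q : regular q -> lin q. Proof. by case. Qed.

Lemma lin_tail s q : lin (s :: q) -> lin q.
Proof. move=> H x; have := H x; rewrite /= ; lia. Qed.

Lemma lin_var_notin x q : lin (Var x :: q) -> Var x \notin q.
Proof. move=> H; have := H x; rewrite /= eqxx add1n ltnS leqn0 => /eqP.
by move/count_memPn. Qed.

Lemma subst_eq_in h h' q : (forall y, Var y \in q -> h y = h' y) -> subst h q = subst h' q.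
Proof.
elim: q => [|s q IH] H; first by [].
have H' : forall y, Var y \in q -> h y = h' y.
  by move=> y Hy; apply: H; rewrite in_cons Hy orbT.
case: s H => [x|a] H.
- by rewrite !subst_var (H x (mem_head _ _)) (IH H').
- by rewrite !subst_let (IH H').
Qed.

Lemma inL_var x q u w : lin (Var x :: q) -> inL q w -> inL (Var x :: q) (u ++ w).
Proof.
move=> Hl [h ->]; have Hn := lin_var_notin Hl.
exists (fun y => if y == x then u else h y).
rewrite subst_var eqxx; congr (_ ++ _); apply: subst_eq_in => y Hy.
case: eqP => // E; subst y; by rewrite Hy in Hn.
Qed.

Lemma inL_let a q w : inL q w -> inL (Let a :: q) (a :: w).
Proof. by case=> h ->; exists h. Qed.

Lemma subseq_split1 (a : bool) c w : subseq (a :: c) w ->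
  exists w1 w2, w = w1 ++ a :: w2 /\ subseq c w2.
Proof.
elim: w => [|y w IH] //=.
case: eqP => [<-|_] H; first by exists [::], w.
have [w1 [w2 [-> H2]]] := IH H; by exists (y :: w1), w2.
Qed.

Lemma subseq_split2 (a b : bool) c w : a != b -> subseq [:: a, b & c] w ->
  exists w1 w2, w = w1 ++ [:: a, b & w2] /\ subseq c w2.
Proof.
move=> nab; elim: w => [|y w IH] //=.
case: (a =P y) => [Ey|ney] H.
- subst y.
  case: w IH H => [|y' w''] IH //=.
  case: (b =P y') => [Eb|neb] H; first by subst y'; exists [::], w''.
  have ea : y' = a by move: nab neb; clear; case: a; case: b; case: y'; move=> /= /eqP.
  subst y'.
  have [w1 [w2 [E H2]]] : exists w1 w2, a :: w'' = w1 ++ [:: a, b & w2] /\ subseq c w2.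
    by apply: IH => /=; rewrite eqxx.
  by exists (a :: w1), w2; rewrite E.
- have [w1 [w2 [-> H2]]] := IH H; by exists (y :: w1), w2.
Qed.

Fixpoint goodv (q : pattern) : bool :=
  match q with
  | [::] => true
  | Var _ :: r => goodv r
  | Let _ :: Var _ :: r => goodv r
  | Let a :: Let b :: Var _ :: r => (a != b) && goodv r
  | _ => false
  end.

Lemma core_goodv n q : size q <= n -> goodv q -> lin q -> forall w, subseq (cst q) w ->
  exists w0 h, w = w0 ++ subst h q.
Proof.
elim: n q => [|n IH] q.
  rewrite leqn0 => /nilP -> _ _ w _; by exists w, (fun _ => [::]); rewrite cats0.
case: q => [|[x|a] q] Hs Hg Hl w Hw.
- by exists w, (fun _ => [::]); rewrite cats0.
- have Hl' := lin_tail Hl.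
  have [w0 [h E]] := IH q Hs Hg Hl' w Hw.
  have [h' E'] := inL_var w0 Hl (ex_intro _ h (erefl (subst h q))).
  by exists [::], h'; rewrite E E'.
- case: q Hs Hg Hl Hw => [|[y|b] q] //.
  + move=> Hs Hg Hl Hw.
    have Hl' := lin_tail (lin_tail Hl).
    have : subseq (a :: cst q) w by [].
    move=> /subseq_split1 [w1 [w2 [-> H2]]].
    have [w0 [h E]] := IH q (ltnW Hs) Hg Hl' w2 H2.
    have [h' E'] := inL_var w0 (lin_tail Hl) (ex_intro _ h (erefl (subst h q))).
    exists w1, h'; by rewrite subst_let -E' E.
  + case: q => [|[z|c] q] //.
    move=> Hs /andP[nab Hg] Hl Hw.
    have Hl' := lin_tail (lin_tail (lin_tail Hl)).
    have : subseq [:: a, b & cst q] w by [].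
    move=> /(subseq_split2 nab) [w1 [w2 [-> H2]]].
    have Hs' : size q <= n by move: Hs => /=; lia.
    have [w0 [h E]] := IH q Hs' Hg Hl' w2 H2.
    have [h' E'] := inL_var w0 (lin_tail (lin_tail Hl)) (ex_intro _ h (erefl (subst h q))).
    exists w1, h'; by rewrite !subst_let -E' E.
Qed.

Definition noAA (q : pattern) := forall X Y a, q <> X ++ [:: Let a, Let a & Y].
Definition noABA (q : pattern) := forall X Y a, q <> X ++ [:: Let a, Let (~~ a), Let a & Y].
Definition noEndLet (q : pattern) := forall X a, q <> rcons X (Let a).

Lemma noAA_tail s r : noAA (s :: r) -> noAA r.
Proof. by move=> H X Y a E; apply: (H (s :: X) Y a); rewrite E. Qed.
Lemma noABA_tail s r : noABA (s :: r) -> noABA r.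
Proof. by move=> H X Y a E; apply: (H (s :: X) Y a); rewrite E. Qed.
Lemma noEndLet_tail s r : noEndLet (s :: r) -> noEndLet r.
Proof. by move=> H X a E; apply: (H (s :: X) a); rewrite E rcons_cons. Qed.

Lemma infix_goodv n r : size r <= n -> noEndLet r -> noAA r -> noABA r -> goodv r.
Proof.
elim: n r => [|n IH] r; first by rewrite leqn0 => /nilP ->.
case: r => [|[y|a] r] //= Hs He Ha Hb.
- exact: IH Hs (noEndLet_tail He) (noAA_tail Ha) (noABA_tail Hb).
- case: r Hs He Ha Hb => [|[z|b] r] Hs He Ha Hb.
  + by case: (He [::] a).
  + apply: IH (ltnW Hs) (noEndLet_tail (noEndLet_tail He))
      (noAA_tail (noAA_tail Ha)) (noABA_tail (noABA_tail Hb)).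
  + case: r Hs He Ha Hb => [|[x|c] r] Hs He Ha Hb.
    * by case: (He [:: Let a] b).
    * have nab : a != b.
        by apply/eqP => E; subst b; apply: (Ha [::] (Var x :: r) a).
      rewrite nab /=.
      have Hs' : size r <= n by move: Hs => /=; lia.
      apply: IH Hs' (noEndLet_tail (noEndLet_tail (noEndLet_tail He)))
        (noAA_tail (noAA_tail (noAA_tail Ha))) (noABA_tail (noABA_tail (noABA_tail Hb))).
    * exfalso.
      case: (a =P b) => [E|nab]; first by subst b; apply: (Ha [::] (Let c :: r) a).
      case: (b =P c) => [E|nbc]; first by subst c; apply: (Ha [:: Let a] r b).
      have Eb : b = ~~ a by move: nab; clear; case: a; case: b.
      have Ec : c = a by move: nab nbc; clear; case: a; case: b; case: c.
      subst b c; exact: (Hb [::] r a).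
Qed.

Lemma CORE q : lin q -> q <> [::] -> (forall a Y, q <> Let a :: Y) -> noEndLet q ->
  noAA q -> noABA q -> forall w, subseq (cst q) w -> inL q w.
Proof.
case: q => [|[x|a] r] Hl Hn Hh He Ha Hb w Hw //; last by case: (Hh a r).
have Hg : goodv r := infix_goodv (leqnn _) (noEndLet_tail He) (noAA_tail Ha) (noABA_tail Hb).
have [w0 [h E]] := core_goodv (leqnn _) Hg (lin_tail Hl) Hw.
rewrite E; apply: inL_var => //; by exists h.
Qed.

Definition endsL (q : pattern) := q = [::] \/ exists q0 a, q = rcons q0 (Let a).
Definition startsL (q : pattern) := q = [::] \/ exists a r, q = Let a :: r.

Lemma cat_split_le (T : eqType) (A B C D : seq T) : A ++ B = C ++ D -> size C <= size A ->
  A = C ++ drop (size C) A /\ D = drop (size C) A ++ B.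
Proof.
move=> E Hs; move: E; rewrite -{1}(cat_take_drop (size C) A) -catA => /eqP.
rewrite eqseq_cat ?size_takel //.
case/andP => /eqP Et /eqP Ed; split => //.
by rewrite -{1}(cat_take_drop (size C) A) Et.
Qed.

Lemma dich q h u z v : lin q -> subst h q = u ++ z ++ v ->
 (exists z1 z2, z = z1 ++ z2 /\ forall d, inL q (u ++ z1 ++ d :: z2 ++ v)) \/
 (exists q1 q2, q = q1 ++ map Let z ++ q2 /\ subst h q1 = u /\ subst h q2 = v /\
   endsL q1 /\ startsL q2).
Proof.
elim: q u z => [|[x|a] q IH] u z Hl E.
- right; exists [::], [::].
  case: u E => // ; case: z => //; case: v => // _.
  by split => //; split => //; split => //; split; left.
- rewrite subst_var in E.
  case: (leqP (size u) (size (h x))) => Hsz.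
  + left; exists [::], z; split => // d.
    have [Ht Hd] := cat_split_le E Hsz.
    rewrite cat0s Hd -cat_cons catA.
    apply: inL_var => //; by exists h.
  + have [Hu E'] := cat_split_le (esym E) (ltnW Hsz).
    have Hne : 0 < size (drop (size (h x)) u) by rewrite size_drop subn_gt0.
    case: (IH _ _ (lin_tail Hl) E') => [[z1 [z2 [Ez Hi]]]|[q1 [q2 [Eq [E1 [E2 [H1 H2]]]]]]].
    * left; exists z1, z2; split => // d.
      rewrite Hu -catA; apply: inL_var => //; exact: Hi.
    * right; exists (Var x :: q1), q2; rewrite Eq subst_var E1 -Hu; do 4!split => //; rewrite /endsL.
      case: H1 => [E0|[q0 [b ->]]]; first by rewrite E0 /= in E1; rewrite -E1 in Hne.
      by right; exists (Var x :: q0), b.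
- rewrite subst_let in E.
  case: u E => [|b u'] E.
  + case: z E => [|b z'] E.
    * right; exists [::], (Let a :: q); split => //; split => //; split; first by rewrite subst_let.
      by split; [left|right; exists a, q].
    * case: E => Eab E'; subst b.
      case: (IH [::] z' (lin_tail Hl) E') => [[z1 [z2 [Ez Hi]]]|[q1 [q2 [Eq [E1 [E2 [H1 H2]]]]]]].
      -- left; exists (a :: z1), z2; split; first by rewrite Ez.
         move=> d; apply: inL_let; exact: Hi.
      -- right; exists [::], q2.
         case: H1 => [E0|[q0 [c E0]]]; last by rewrite E0 subst_rcons in E1; case: (subst h q0) E1.
         subst q1; rewrite Eq; do 4!split => //; by left.
  + case: E => Eab E'; subst b.
    case: (IH u' z (lin_tail Hl) E') => [[z1 [z2 [Ez Hi]]]|[q1 [q2 [Eq [E1 [E2 [H1 H2]]]]]]].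
    * left; exists z1, z2; split => // d; apply: inL_let; exact: Hi.
    * right; exists (Let a :: q1), q2; rewrite Eq subst_let E1; do 4!split => //; rewrite /endsL.
      right; case: H1 => [->|[q0 [c ->]]]; first by exists [::], a.
      by exists (Let a :: q0), c.
Qed.

Lemma catIs_ (T : eqType) (s1 s2 s : seq T) : s1 ++ s = s2 ++ s -> s1 = s2.
Proof.
move=> E; have Hs : size s1 = size s2 by move: (congr1 size E); rewrite !size_cat; lia.
by move: E => /eqP; rewrite eqseq_cat // => /andP [/eqP].
Qed.

Lemma catsI_ (T : eqType) (s1 s2 s : seq T) : s ++ s1 = s ++ s2 -> s1 = s2.
Proof. by move=> /eqP; rewrite eqseq_cat // => /andP [_ /eqP]. Qed.

Lemma cst_cat q1 q2 : cst (q1 ++ q2) = cst q1 ++ cst q2. Proof. exact: subst_cat. Qed.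
Lemma cst_var x q : cst (Var x :: q) = cst q. Proof. by []. Qed.
Lemma cst_let a q : cst (Let a :: q) = a :: cst q. Proof. by []. Qed.
Lemma cst_mapLet z : cst (map Let z) = z.
Proof. by elim: z => //= a z IH; rewrite cst_let IH. Qed.
Lemma subst_mapLet h z : subst h (map Let z) = z.
Proof. by elim: z => //= a z IH; rewrite subst_let IH. Qed.

Definition ins (s : word) g (c : bool) := take g s ++ c :: drop g s.

Lemma size_subst_ge h q y :
  size (cst q) + count_mem (Var y) q * size (h y) <= size (subst h q).
Proof.
elim: q => [|[x|a] q IH]; first by rewrite /= mul0n.
- rewrite cst_var subst_var size_cat /=.
  have -> : (Var x == Var y) = (x == y) by [].
  case: (x =P y) => [->|ne] /=; last by rewrite add0n; apply: leq_trans IH (leq_addl _ _).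
  by rewrite add1n mulSn addnCA leq_add2l.
- by rewrite cst_let subst_let /= add0n addSn ltnS.
Qed.

Lemma count_filter_mem (P : pred sym) q a : count_mem a (filter P q) = P a * count_mem a q.
Proof.
elim: q => [|y q IH]; first by rewrite /= muln0.
have [E|ne] := eqVneq y a.
- subst a; rewrite /=; case Py: (P y) => /=; rewrite ?eqxx IH Py /=; lia.
- rewrite /= (negbTE ne); case: (P y) => /=; rewrite IH ?(negbTE ne) //.
Qed.

Lemma subst_filter (P : pred sym) h q : (forall a, P (Let a)) ->
  (forall y, ~~ P (Var y) -> h y = [::]) -> subst h (filter P q) = subst h q.
Proof.
move=> HL HV; elim: q => [|[x|a] q IH] //=.
- case: (boolP (P (Var x))) => Px; first by rewrite !subst_var IH.
  by rewrite subst_var HV // IH.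
- by rewrite HL !subst_let IH.
Qed.

Section CaseB.
Variable p : pattern.
Definition Pk (sy : sym) : bool := if sy is Var y then count_mem (Var y) p == 1 else true.
Definition pk := filter Pk p.

Lemma cst_pk : cst pk = cst p.
Proof. rewrite /cst; apply: subst_filter => // y; by []. Qed.

Lemma lin_pk : lin pk.
Proof.
move=> x; rewrite count_filter_mem /=.
by case: eqP => [->|_]; rewrite ?mul1n ?mul0n.
Qed.

Lemma pk_sub w : inL pk w -> inL p w.
Proof.
case=> h ->.
pose h' := fun y => if count_mem (Var y) p == 1 then h y else [::].
exists h'.
rewrite -(@subst_filter Pk h' p) //; last first.
  by move=> y /negbTE H; rewrite /h'; move: H => /= ->.
apply: subst_eq_in => y; rewrite mem_filter => /andP [Hy _].
by rewrite /h'; move: Hy => /= ->.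
Qed.

Lemma L1 w : size w = (size (cst p)).+1 -> inL p w -> inL pk w.
Proof.
move=> Hs [h Ew].
pose h' := fun y => if count_mem (Var y) p == 1 then h y else [::].
have E1 : subst h' p = subst h p.
  apply: subst_eq_in => y Hy; rewrite /h'; case: eqP => // ne.
  have Hc : 2 <= count_mem (Var y) p.
    have Hpos : 0 < count_mem (Var y) p.
      by rewrite lt0n; apply/negP => /eqP/count_memPn; rewrite Hy.
    by move: ne Hpos; lia.
  have := size_subst_ge h p y; rewrite -Ew Hs.
  case: (h y) => // a l /= H; exfalso.
  have H2 : 2 <= count_mem (Var y) p * (size l).+1 by apply: leq_trans Hc (leq_pmulr _ _).
  by move: H; rewrite -[(size (cst p)).+1]addn1 leq_add2l leqNgt H2.
exists h'; rewrite Ew -E1 /pk subst_filter //.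
by move=> y /= /negbTE; rewrite /h' => ->.
Qed.
End CaseB.

Lemma two_cases (A B C D F G : word) : subseq A C -> subseq B D ->
  C ++ F ++ D = A ++ G ++ B -> size G = (size F).+1 ->
  (C = A /\ F ++ D = G ++ B) \/ (D = B /\ C ++ F = A ++ G).
Proof.
move=> HAC HBD E HG.
have HsA : size A <= size C := size_subseq HAC.
have HsB : size B <= size D := size_subseq HBD.
have Hs := congr1 size E; rewrite !size_cat HG in Hs.
case: (ltnP (size A) (size C)) => HC.
- right; have HD : size D = size B by lia.
  have EDB : D = B.
    by move: (size_subseq_leqif HBD) => [_]; rewrite HD eqxx => /esym/eqP.
  subst D; split => //; apply: (@catIs_ _ _ _ B); by rewrite -!catA.
- left; have HC' : size C = size A by lia.
  have ECA : C = A.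
    by move: (size_subseq_leqif HAC) => [_]; rewrite HC' eqxx => /esym/eqP.
  subst C; split => //; exact: catsI_ E.
Qed.

Lemma ins_cat (A L : word) g c : ins (A ++ L) (size A + g) c = A ++ ins L g c.
Proof.
rewrite /ins take_cat drop_cat ltnNge leq_addr /= addKn.
by rewrite -catA.
Qed.

Lemma size_ins s g c : g <= size s -> size (ins s g c) = (size s).+1.
Proof. by move=> Hg; rewrite /ins size_cat /= size_take size_drop; case: ltnP; lia. Qed.

Lemma goodB q : lin q -> (forall g c, g <= size (cst q) -> inL q (ins (cst q) g c)) ->
  forall w, subseq (cst q) w -> inL q w.
Proof.
move=> Hl H; apply: CORE => //.
- move=> E; subst q; have [h /= E] := H 0 true (leq0n _); by [].
- move=> a Y E; subst q.
  have [h E] := H 0 (~~ a) (leq0n _).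
  by move: E; rewrite /ins take0 drop0 cst_let subst_let /=; clear; case: a.
- move=> X a E; subst q.
  have [h E] := H (size (cst (rcons X (Let a)))) (~~ a) (leqnn _).
  move: E; rewrite /ins take_size drop_size subst_rcons /cst subst_rcons cats1.
  by move/rcons_inj => [_]; clear; case: a.
- move=> X Y a E; subst q.
  have Hc : cst (X ++ [:: Let a, Let a & Y]) = cst X ++ [:: a, a & cst Y].
    by rewrite cst_cat.
  have Hg : size (cst X) + 1 <= size (cst (X ++ [:: Let a, Let a & Y])).
    by rewrite Hc size_cat /=; lia.
  have [h E] := H _ (~~ a) Hg.
  move: E; rewrite Hc ins_cat /ins /= subst_cat !subst_let => E.
  have [[_ E2]|[_ E2]] := two_cases (erase_sub h X) (erase_sub h Y)
     (esym E) (F := [:: a; a]) (G := [:: a; ~~ a; a]) (erefl _).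
  + by case: E2 => /eqP; clear; case: a.
  + by move: E2 => /(congr1 rev); rewrite !rev_cat /= => [[]] /eqP; clear; case: a.
- move=> X Y a E; subst q.
  have Hc : cst (X ++ [:: Let a, Let (~~ a), Let a & Y]) = cst X ++ [:: a, ~~ a, a & cst Y].
    by rewrite cst_cat.
  have Hg : size (cst X) + 2 <= size (cst (X ++ [:: Let a, Let (~~ a), Let a & Y])).
    by rewrite Hc size_cat /=; lia.
  have [h E] := H _ (~~ a) Hg.
  move: E; rewrite Hc ins_cat /ins /= subst_cat !subst_let => E.
  have [[_ E2]|[_ E2]] := two_cases (erase_sub h X) (erase_sub h Y)
     (esym E) (F := [:: a; ~~ a; a]) (G := [:: a; ~~ a; ~~ a; a]) (erefl _).
  + by case: E2 => /eqP; clear; case: a.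
  + by move: E2 => /(congr1 rev); rewrite !rev_cat /= => [[]] /eqP; clear; case: a.
Qed.

Lemma caseB_up p : (forall g c, g <= size (cst p) -> inL p (ins (cst p) g c)) ->
  forall w, subseq (cst p) w -> inL p w.
Proof.
move=> H w Hw; apply: pk_sub.
apply: goodB; first exact: lin_pk.
- move=> g c; rewrite cst_pk => Hg; apply: L1; first exact: size_ins.
  exact: H.
- by rewrite cst_pk.
Qed.

Fixpoint psi1 (s : word) : word :=
  if s is x :: s' then (if x then [:: false; true; false] else [:: false]) ++ psi1 s' else [::].

Definition psi2 (s : word) : word := map negb (psi1 (map negb s)).

Lemma psi1_sub s : subseq s (psi1 s).
Proof.
elim: s => [|[] s IH] //=; by apply: subseq_trans IH (subseq_cons _ _).
Qed.

Lemma psi2_sub s : subseq s (psi2 s).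
Proof.
have := map_subseq negb (psi1_sub (map negb s)).
have -> : map negb (map negb s) = s by rewrite -map_comp (@eq_map _ _ _ id) ?map_id //; case.
by [].
Qed.

Lemma psi1_head s : s != [::] -> exists r, psi1 s = false :: r.
Proof. by case: s => [|[] s] //= _; eexists. Qed.

Lemma psi1_last s : s != [::] -> exists r, psi1 s = rcons r false.
Proof.
elim: s => [|x s IH] // _.
case: s IH => [|y s] IH.
- by case: x; [exists [:: false; true] | exists [::]].
- have [r Er] := IH isT; rewrite /= in Er *; rewrite Er.
  by case: x; [exists [:: false, true, false & r] | exists (false :: r)].
Qed.

Lemma psi1_count s : count_mem true (psi1 s) = count_mem true s.
Proof. by elim: s => [|[] s IH] //=; rewrite IH. Qed.

Lemma psi1_nth s i : nth false (psi1 s) i ->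
  ~~ nth false (psi1 s) i.+1 /\ ~~ nth false (psi1 s) i.+2.
Proof.
elim: s i => [|x s IH] i; first by rewrite nth_nil.
have H0 : ~~ nth false (psi1 s) 0 by case: s {IH} => [|[] s].
case: x => /=.
- case: i => [|[|[|i]]] //= Hi.
  exact: IH.
- case: i => [|i] //=; exact: IH.
Qed.

Lemma nthX (T : Type) (d : T) (X Z : seq T) k : nth d (X ++ Z) (size X + k) = nth d Z k.
Proof. by rewrite nth_cat ltnNge leq_addr /= addKn. Qed.

Lemma psi1_noinf s X Y :
  psi1 s <> X ++ [:: true, true & Y] /\ psi1 s <> X ++ [:: true, false, true & Y].
Proof.
split=> E.
- move: (@psi1_nth s (size X + 0)); rewrite E -!addnS !nthX /= => H.
  by have [H1 _] := H isT.
- move: (@psi1_nth s (size X + 0)); rewrite E -!addnS !nthX /= => H.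
  by have [_ H2] := H isT.
Qed.

Lemma negb_map_inv (w : word) : map negb (map negb w) = w.
Proof. by rewrite -map_comp (@eq_map _ _ _ id) ?map_id //; case. Qed.

Lemma psi2_head s : s != [::] -> exists r, psi2 s = true :: r.
Proof.
move=> Hs; have Hs' : map negb s != [::] by case: s Hs.
have [r Er] := psi1_head Hs'; exists (map negb r); by rewrite /psi2 Er.
Qed.

Lemma psi2_last s : s != [::] -> exists r, psi2 s = rcons r true.
Proof.
move=> Hs; have Hs' : map negb s != [::] by case: s Hs.
have [r Er] := psi1_last Hs'; exists (map negb r); by rewrite /psi2 Er map_rcons.
Qed.

Lemma count_negb (b : bool) (w : word) : count_mem b (map negb w) = count_mem (~~ b) w.
Proof. by rewrite count_map; apply: eq_count => x /=; case: b; case: x. Qed.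

Lemma psi2_count s : count_mem false (psi2 s) = count_mem false s.
Proof. by rewrite /psi2 count_negb /= psi1_count count_negb. Qed.

Lemma psi2_noinf s X Y :
  psi2 s <> X ++ [:: false, false & Y] /\ psi2 s <> X ++ [:: false, true, false & Y].
Proof.
have [H1 H2] := psi1_noinf (map negb s) (map negb X) (map negb Y).
split=> E; [apply: H1 | apply: H2];
  by rewrite -[psi1 _]negb_map_inv -/(psi2 s) E map_cat.
Qed.

Fixpoint NK (K : nat) (s : word) : word :=
  if s is x :: s' then nseq K (~~ x) ++ (if s' is [::] then [::] else x :: NK K s') else [::].

Lemma subseq_nseq_skip (x y : bool) s K w : x != y ->
  subseq (x :: s) (nseq K y ++ w) = subseq (x :: s) w.
Proof. move=> nxy; elim: K => //= K IH; by rewrite (negbTE nxy). Qed.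

Lemma NK_not K s : s != [::] -> ~~ subseq s (NK K s).
Proof.
elim: s => [|x s IH] // _ /=.
rewrite subseq_nseq_skip; last by case: x.
case: s IH => [|y s] IH; first by case: x.
by rewrite /= eqxx; apply: IH.
Qed.

Lemma first_occ (x : bool) c : x \in c -> exists c1 c2, c = c1 ++ x :: c2 /\ x \notin c1.
Proof.
elim: c => [|y c IH] //; rewrite in_cons; case: (x =P y) => [<- _|ne] /=.
  by exists [::], c.
move=> Hc; have [c1 [c2 [E N]]] := IH Hc; exists (y :: c1), c2; rewrite E; split => //.
by rewrite in_cons negb_or N andbT; apply/eqP.
Qed.

Lemma notin_nseq (x : bool) c : x \notin c -> c = nseq (size c) (~~ x).
Proof.
move=> H; apply/all_pred1P/allP => y Hy /=.
have ne : y != x by apply/eqP => E; rewrite -E Hy in H.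
by move: ne; clear; case: x; case: y.
Qed.

Lemma subseq_nseq (y : bool) n K : n <= K -> subseq (nseq n y) (nseq K y).
Proof. by move=> H; rewrite -(subnKC H) nseqD; apply: prefix_subseq. Qed.

Lemma NK_up K s c : s != [::] -> size c <= K -> ~~ subseq s c -> subseq c (NK K s).
Proof.
elim: s c => [|x s IH] c // _ Hc Hn /=.
case: (boolP (x \in c)) => Hx.
- have [c1 [c2 [E N]]] := first_occ Hx.
  have Hn2 : ~~ subseq s c2.
    apply: contra Hn => H; rewrite E -[x :: s]cat0s; apply: cat_subseq; first exact: sub0seq.
    by rewrite /= eqxx.
  case: s IH Hn2 {Hn} => [|y s] IH Hn2; first by rewrite sub0seq in Hn2.
  rewrite E; apply: cat_subseq.
    rewrite (notin_nseq N); apply: subseq_nseq.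
    by apply: leq_trans Hc; rewrite E size_cat leq_addr.
  rewrite /= eqxx; apply: IH => //.
  by apply: leq_trans Hc; rewrite E size_cat /=; lia.
- rewrite (notin_nseq Hx) -[nseq _ _]cats0; apply: cat_subseq; last exact: sub0seq.
  exact: subseq_nseq.
Qed.

Definition tprop (c : bool) (r : nat) (t : word) :=
 (forall j, j < r -> j < size t /\ nth c t j = c) /\
 (forall i j, nth c t i = ~~ c -> 0 < j <= r -> i + j < size t /\ nth c t (i + j) = c).

Lemma cneg (c : bool) : c <> ~~ c. Proof. by case: c. Qed.

Lemma tA c r t X Y z : tprop c r t -> size z < r -> t <> X ++ ~~ c :: z ++ ~~ c :: Y.
Proof.
move=> [_ P2] Hz E.
have H1 : nth c t (size X) = ~~ c by rewrite E -[size X]addn0 nthX.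
have [_ H2] := P2 _ (size z).+1 H1 Hz.
move: H2; rewrite E nthX /= -[size z]addn0 nthX /=; clear; by case: c.
Qed.

Lemma tB c r t Y z : tprop c r t -> size z < r -> t <> z ++ ~~ c :: Y.
Proof.
move=> [P1 _] Hz E; have [_ H] := P1 _ Hz.
move: H; rewrite E -[size z]addn0 nthX /= ; clear; by case: c.
Qed.

Lemma tC c r t X z : tprop c r t -> size z < r -> t <> X ++ ~~ c :: z.
Proof.
move=> [_ P2] Hz E.
have H1 : nth c t (size X) = ~~ c by rewrite E -[size X]addn0 nthX.
have [H2 _] := P2 _ (size z).+1 H1 Hz.
by move: H2; rewrite E size_cat /= ltnn.
Qed.

Lemma tD c r t z : tprop c r t -> size z < r -> t <> z.
Proof. by move=> [P1 _] Hz E; have [H _] := P1 _ Hz; move: H; rewrite E ltnn. Qed.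

Lemma suffix_run (u0 : word) c : exists u z1, u0 = u ++ z1 /\ all (pred1 c) z1 /\ last (~~ c) u = ~~ c.
Proof.
elim/last_ind: u0 => [|u0 x [u [z1 [E [H1 H2]]]]]; first by exists [::], [::].
case: (x =P c) => [Ex|ne].
- exists u, (rcons z1 x); rewrite E rcons_cat; split => //.
  by rewrite all_rcons /= Ex eqxx.
- exists (rcons u0 x), [::]; rewrite cats0 last_rcons; split => //.
  by move: ne; clear; case: x; case: c.
Qed.

Lemma prefix_run (v0 : word) c : exists z2 v, v0 = z2 ++ v /\ all (pred1 c) z2 /\ head (~~ c) v = ~~ c.
Proof.
elim: v0 => [|x v0 [z2 [v [E [H1 H2]]]]]; first by exists [::], [::].
case: (x =P c) => [Ex|ne].
- exists (x :: z2), v; rewrite E; split => //=; by rewrite Ex eqxx.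
- exists [::], (x :: v0); split => //=.
  by move: ne; clear; case: x; case: c.
Qed.

Lemma all_pred1_eq (c : bool) (x y : word) : all (pred1 c) x -> all (pred1 c) y ->
  size x = size y -> x = y.
Proof. by move=> /all_pred1P Ex /all_pred1P Ey Hs; rewrite Ex Ey Hs. Qed.

Lemma caseA p s g c t : cst p = s -> g <= size s -> ~ inL p (ins s g c) -> inL p t ->
  tprop c (size s).+1 t -> TD_le regular p 3.
Proof.
move=> Hcst Hg HN Ht Htp.
have [u [z1 [Eu [Hz1 Hlu]]]] := suffix_run (take g s) c.
have [z2 [v [Ev [Hz2 Hhv]]]] := prefix_run (drop g s) c.
set z := z1 ++ z2.
have Es : s = u ++ z ++ v by rewrite -(cat_take_drop g s) Eu Ev /z !catA.
have EN : ins s g c = u ++ z1 ++ c :: z2 ++ v by rewrite /ins Eu Ev !catA.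
have Hz : all (pred1 c) z by rewrite all_cat Hz1 Hz2.
have Hzs : size z < (size s).+1 by rewrite ltnS Es !size_cat; lia.
exists [:: (s, true); (t, true); (ins s g c, false)]; split => //; split.
- move=> e; rewrite !inE => /orP [/eqP ->|/orP [/eqP ->|/eqP ->]] /=.
  + by split => // _; rewrite -Hcst; exact: cst_inL.
  + by split.
  + by split.
- move=> q Hq Hc; exfalso.
  have Hq1 : inL q s by apply/(Hc (s, true)); rewrite ?inE ?eqxx.
  have Hq2 : inL q t by apply/(Hc (t, true)); rewrite ?inE ?eqxx ?orbT.
  have Hq3 : ~ inL q (ins s g c).
    by move=> H; have := (Hc (ins s g c, false)); rewrite !inE eqxx !orbT => /(_ isT) [/(_ H)].
  case: Hq1 => h Eh.
  have Hl := regular_lin Hq.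
  case: (dich Hl (etrans (esym Eh) Es)) => [[z1' [z2' [Ez Hi]]]|[q1 [q2 [Eq [E1 [E2 [H1 H2]]]]]]].
  + apply: Hq3.
    have E' : z1 ++ c :: z2 = z1' ++ c :: z2'.
      apply: (@all_pred1_eq c).
      * by rewrite all_cat /= eqxx Hz1 Hz2.
      * by rewrite all_cat /= eqxx; move: Hz; rewrite Ez all_cat => /andP [-> ->].
      * by rewrite !size_cat /=; move: (congr1 size Ez); rewrite /z !size_cat; lia.
    rewrite EN -cat_cons (catA z1) E' -catA cat_cons; exact: Hi.
  + case: Hq2 => h' Et.
    rewrite Eq !subst_cat subst_mapLet in Et.
    case: H1 => [E0|[q0 [a E0]]]; case: H2 => [F0|[b [r0 F0]]]; subst q1 q2;
      rewrite ?subst_nil ?cat0s ?cats0 in Et.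
    * exact: (tD Htp Hzs Et).
    * have Eb : b = ~~ c by move: E2 Hhv; rewrite subst_let => <-.
      rewrite subst_let Eb /= in Et; exact: (tB Htp Hzs Et).
    * have Ea : a = ~~ c by move: E1 Hlu; rewrite subst_rcons => <-; rewrite last_rcons.
      rewrite subst_rcons Ea -cats1 -catA /= in Et; exact: (tC Htp Hzs Et).
    * have Ea : a = ~~ c by move: E1 Hlu; rewrite subst_rcons => <-; rewrite last_rcons.
      have Eb : b = ~~ c by move: E2 Hhv; rewrite subst_let => <-.
      rewrite subst_rcons subst_let Ea Eb -cats1 -catA /= in Et; exact: (tA Htp Hzs Et).
Qed.

Lemma subst_mapVar_nseq r (c : bool) b : subst (fun _ => nseq r c) (map Var b) = nseq (r * size b) c.
Proof. elim: b => [|x b IH] /=; first by rewrite muln0. by rewrite subst_var IH mulnS nseqD. Qed.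

Lemma subst_flatten h (L : seq pattern) : subst h (flatten L) = flatten (map (subst h) L).
Proof. by elim: L => //= x L IH; rewrite subst_cat IH. Qed.

Definition TW r (c : bool) (rest : seq (bool * seq nat)) : word :=
  flatten [seq r'.1 :: nseq (r * size r'.2) c | r' <- rest].

Lemma subst_build r c b0 rest :
  subst (fun _ => nseq r c) (build_blocks b0 rest) = nseq (r * size b0) c ++ TW r c rest.
Proof.
rewrite /build_blocks subst_cat subst_mapVar_nseq; congr (_ ++ _).
rewrite subst_flatten /TW -map_comp; congr flatten; apply: eq_map => [[a b]] /=.
by rewrite subst_let subst_mapVar_nseq.
Qed.

Lemma nth_nseq_cat (c : bool) n T i : i < n -> nth c (nseq n c ++ T) i = c.
Proof. by move=> H; rewrite nth_cat size_nseq H nth_nseq H. Qed.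

Lemma nth_nseq_cat2 (c : bool) n T k : nth c (nseq n c ++ T) (n + k) = nth c T k.
Proof. by rewrite nth_cat size_nseq ltnNge leq_addr /= addKn. Qed.

Lemma TW_p2 r c rest : all (fun r' => r'.2 != [::]) rest -> 0 < r ->
  forall i j, nth c (TW r c rest) i = ~~ c -> 0 < j <= r ->
    i + j < size (TW r c rest) /\ nth c (TW r c rest) (i + j) = c.
Proof.
move=> Hall Hr; elim: rest Hall => [|[x b] rest IH] //=.
  by move=> _ i j; rewrite nth_nil; clear; case: c.
case/andP => Hb Hall i j.
have Hn : r <= r * size b by rewrite leq_pmulr // lt0n size_eq0.
rewrite -/(TW r c rest).
case: i => [|i] /=.
- move=> _ /andP [Hj0 Hjr].
  case: j Hj0 Hjr => [|j] // _ Hjr /=.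
  rewrite size_cat size_nseq nth_nseq_cat; last by apply: leq_trans Hjr Hn.
  split => //; rewrite add0n ltnS; apply: leq_trans (leq_trans Hjr Hn) (leq_addr _ _).
- case: (ltnP i (r * size b)) => Hi.
  + by rewrite nth_nseq_cat //; clear; case: c.
  + move=> Hni Hj.
    have [IH1 IH2] : (i - r * size b) + j < size (TW r c rest) /\
                     nth c (TW r c rest) ((i - r * size b) + j) = c.
      apply: IH => //; move: Hni; rewrite -{1}(subnKC Hi).
      by rewrite nth_nseq_cat2.
    have Eij : i + j = r * size b + ((i - r * size b) + j) by rewrite addnA subnKC.
    rewrite addSn /= Eij nth_nseq_cat2; split => //.
    by rewrite size_cat size_nseq ltnS ltn_add2l.
Qed.

Lemma tprop_build r c b0 rest : b0 != [::] -> all (fun b => b != [::]) (map snd rest) -> 0 < r ->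
  tprop c r (subst (fun _ => nseq r c) (build_blocks b0 rest)).
Proof.
move=> Hb0 Hall Hr; rewrite subst_build.
have Hall' : all (fun r' => r'.2 != [::]) rest by rewrite all_map in Hall.
have Hn : r <= r * size b0 by rewrite leq_pmulr // lt0n size_eq0.
split.
- move=> j Hj; rewrite size_cat size_nseq nth_nseq_cat; last exact: leq_trans Hj Hn.
  split => //; apply: leq_trans (leq_trans Hj Hn) (leq_addr _ _).
- move=> i j Hni Hj.
  case: (ltnP i (r * size b0)) => Hi; first by move: Hni; rewrite nth_nseq_cat //; clear; case: c.
  have Hk : nth c (TW r c rest) (i - r * size b0) = ~~ c.
    by move: Hni; rewrite -{1}(subnKC Hi) nth_nseq_cat2.
  have [IH1 IH2] := TW_p2 Hall' Hr Hk Hj.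
  have Eij : i + j = r * size b0 + ((i - r * size b0) + j) by rewrite addnA subnKC.
  rewrite Eij nth_nseq_cat2; split => //.
  by rewrite size_cat size_nseq ltn_add2l.
Qed.

Lemma size_bool (w : word) : size w = count_mem true w + count_mem false w.
Proof. by rewrite -(count_predC (pred1 true) w); congr (_ + _); apply: eq_count; case. Qed.

Lemma caseLin p s : s != [::] -> (forall w, inL p w <-> subseq s w) -> TD_le regular p 3.
Proof.
move=> Hs Hp.
pose K := size (psi1 s).
exists [:: (psi1 s, true); (psi2 s, true); (NK K s, false)]; split => //; split.
- move=> e; rewrite !inE => /orP [/eqP ->|/orP [/eqP ->|/eqP ->]] /=.
  + by split => // _; apply/Hp; exact: psi1_sub.
  + by split => // _; apply/Hp; exact: psi2_sub.
  + split => // /Hp H; by move: (NK_not K Hs); rewrite H.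
- move=> q Hq Hc.
  have Hq1 : inL q (psi1 s) by apply/(Hc (psi1 s, true)); rewrite ?inE ?eqxx.
  have Hq2 : inL q (psi2 s) by apply/(Hc (psi2 s, true)); rewrite ?inE ?eqxx ?orbT.
  have Hq3 : ~ inL q (NK K s).
    by move=> H; have := (Hc (NK K s, false)); rewrite !inE eqxx !orbT => /(_ isT) [/(_ H)].
  have HC : forall w, subseq (cst q) w -> inL q w.
    apply: CORE; first exact: regular_lin.
    + by case: Hq => /eqP.
    + move=> a Y E; subst q; case: Hq1 => h E1; case: Hq2 => h' E2.
      have [r1 F1] := psi1_head Hs; have [r2 F2] := psi2_head Hs.
      rewrite F1 subst_let in E1; rewrite F2 subst_let in E2.
      by case: E1 => Ea _; case: E2 => Eb _; rewrite -Ea in Eb.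
    + move=> X a E; subst q; case: Hq1 => h E1; case: Hq2 => h' E2.
      have [r1 F1] := psi1_last Hs; have [r2 F2] := psi2_last Hs.
      rewrite F1 subst_rcons in E1; rewrite F2 subst_rcons in E2.
      by move/rcons_inj: E1 => [_ Ea]; move/rcons_inj: E2 => [_ Eb]; rewrite -Ea in Eb.
    + move=> X Y a E; subst q; case: Hq1 => h E1; case: Hq2 => h' E2.
      rewrite subst_cat !subst_let in E1; rewrite subst_cat !subst_let in E2.
      clear Hq Hc Hq3; case: a E1 E2 => E1 E2; [exact: (psi1_noinf s _ _).1 E1 | exact: (psi2_noinf s _ _).1 E2].
    + move=> X Y a E; subst q; case: Hq1 => h E1; case: Hq2 => h' E2.
      rewrite subst_cat !subst_let in E1; rewrite subst_cat !subst_let in E2.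
      clear Hq Hc Hq3; case: a E1 E2 => E1 E2; [exact: (psi1_noinf s _ _).2 E1 | exact: (psi2_noinf s _ _).2 E2].
  have S1 := inL_sub Hq1; have S2 := inL_sub Hq2.
  have Hsc : subseq s (cst q).
    apply/negPn/negP => Hn; apply: Hq3; apply: HC.
    by apply: (NK_up Hs _ Hn); exact: size_subseq S1.
  have Ec : cst q = s.
    have C1 : count_mem true (cst q) <= count_mem true s.
      by rewrite -(psi1_count s); apply: leq_count_subseq.
    have C2 : count_mem false (cst q) <= count_mem false s.
      by rewrite -(psi2_count s); apply: leq_count_subseq.
    have Hle : size (cst q) <= size s by rewrite !size_bool; lia.
    have Hsz : size s = size (cst q) by apply/eqP; rewrite eqn_leq Hle (size_subseq Hsc).
    apply/esym/eqP; have [_ <-] := size_subseq_leqif Hsc; by rewrite Hsz.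
  move=> w; split => [/inL_sub|/Hp H].
  + by rewrite Ec => H; apply/Hp.
  + by apply: HC; rewrite Ec.
Qed.

Lemma caseEmpty p : (forall w, inL p w <-> subseq [::] w) -> TD_le regular p 3.
Proof.
move=> Hp; exists [:: ([::], true)]; split => //; split.
- move=> e; rewrite inE => /eqP -> /=; split => // _; apply/Hp; exact: sub0seq.
- move=> q Hq Hc.
  have Hq1 : inL q [::] by apply/(Hc ([::], true)); rewrite ?inE ?eqxx.
  have Hc0 : cst q = [::] by move: (inL_sub Hq1); rewrite subseq0 => /eqP.
  have HC : forall w, subseq (cst q) w -> inL q w.
    apply: CORE; first exact: regular_lin.
    + by case: Hq => /eqP.
    + by move=> a Y E; rewrite E cst_let in Hc0.
    + move=> X a E; rewrite E /cst subst_rcons in Hc0; by case: (subst _ X) Hc0.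
    + move=> X Y a E; rewrite E cst_cat cst_let in Hc0; by case: (cst X) Hc0.
    + move=> X Y a E; rewrite E cst_cat cst_let in Hc0; by case: (cst X) Hc0.
  move=> w; split => [_|_]; last by apply: HC; rewrite Hc0 sub0seq.
  apply/Hp; exact: sub0seq.
Qed.

Theorem mainTheorem4 (p : pattern) :
  simple_block_regular p -> TD_le regular p 3.
Proof.
case=> b0 [rest [Ep Hall _]].
case: (classic (forall g c, g <= size (cst p) -> inL p (ins (cst p) g c))) => H.
- have Hup := caseB_up H.
  have Hiff : forall w, inL p w <-> subseq (cst p) w.
    by move=> w; split; [exact: inL_sub | exact: Hup].
  case: (eqVneq (cst p) [::]) => Hs.
  + by apply: caseEmpty; rewrite -Hs.
  + exact: caseLin Hs Hiff.
- have [g [c [Hg HN]]] : exists g c, g <= size (cst p) /\ ~ inL p (ins (cst p) g c).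
    apply: NNPP => Hne; apply: H => g c Hg; apply: NNPP => Hn; apply: Hne; by exists g, c.
  apply: (caseA (erefl (cst p)) Hg HN (t := subst (fun _ => nseq (size (cst p)).+1 c) p)).
  + by exists (fun _ => nseq (size (cst p)).+1 c).
  + move: Hall => /= /andP [Hb0 Hall].
    have := tprop_build c Hb0 Hall (ltn0Sn (size (cst p))).
    by rewrite -Ep.
Qed.
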